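(* Let $X=\{0,1\}$ and $c\geq1$. Let $\widetilde K_{1,01}(c)$ be the set of all $w\in X^c$ such that the sequence $(1,01,w)$ is not a code, and let $J_{1,01}(c)$ be the set of all words in $X^c$ that do not contain two consecutive $0$'s (i.e. do not contain $00$ as a factor). Then $\widetilde K_{1,01}(c)=J_{1,01}(c)$, and $|\widetilde K_{1,01}(c)|=F_{c+2}$, where $F_k$ is the $k$-th Fibonacci number ($F_0=0$, $F_1=1$, $F_k=F_{k-1}+F_{k-2}$).
   Context: A code over $X$ is a finite sequence $C=(v_1,\ldots,v_m)$ of words over $X$ such that every $w\in X^*$ has at most one factorization into code-words: if $w=v_{i_1}\cdots v_{i_l}=v_{j_1}\cdots v_{j_{l'}}$ with $l,l'\geq1$, then $l=l'$ and $i_t=j_t$ for all $t$. *)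

(* Defs.v *)
From mathcomp Require Import all_boot.
Set Implicit Arguments. Unset Strict Implicit. Unset Printing Implicit Defensive.

(* Alphabet X = {0,1} is encoded as bool: letter 0 = false, letter 1 = true.
   Words over X are seq bool. *)
Definition word := seq bool.

(* A factorization is given by a
   non-empty sequence of indices (0-based, each < size C). *)
Definition concat_idx (C : seq word) (s : seq nat) : word :=
  flatten [seq nth [::] C i | i <- s].

Definition is_code (C : seq word) : Prop :=
  forall s t : seq nat,
    s != [::] -> t != [::] ->
    all (fun i => i < size C) s -> all (fun i => i < size C) t ->
    concat_idx C s = concat_idx C t -> s = t.

Definition J101 (c : nat) : {set c.-tuple bool} :=
  [set w : c.-tuple bool | ~~ infix [:: false; false] (val w)].

Fixpoint fib (n : nat) : nat :=
  match n with
  | 0 => 0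
  | 1 => 1
  | (m.+1 as k).+1 => fib k + fib m
  end.

(* Main.v *)
Require Import Defs.
From mathcomp Require Import all_boot.
From mathcomp Require Import zify.

Set Implicit Arguments. Unset Strict Implicit. Unset Printing Implicit Defensive.

Fixpoint hasff (s : word) : bool :=
  match s with
  | a :: ((b :: _) as t) => (~~ a && ~~ b) || hasff t
  | _ => false
  end.

Lemma infix_hasff (s : word) : infix [:: false; false] s = hasff s.
Proof.
elim: s => [|a t IH] //=.
rewrite IH; case: t {IH} => [|b t]; first by case: a.
by case: a; case: b => //=; rewrite ?prefix0s.
Qed.

Lemma hasff_true z : hasff (true :: z) = hasff z.
Proof. by case: z. Qed.

Lemma hasff_ft z : hasff (false :: true :: z) = hasff z.
Proof. by case: z. Qed.

Lemma concat_cons C i t : concat_idx C (i :: t) = nth [::] C i ++ concat_idx C t.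
Proof. by []. Qed.

Lemma catsI' (T : Type) (u a b : seq T) : u ++ a = u ++ b -> a = b.
Proof. by elim: u => //= x u IH [] /IH. Qed.

Section W.
Variable w : word.
Let C := [:: [:: true]; [:: false; true]; w].

Lemma decomp x : ~~ hasff x ->
  exists t, all (fun i => i < 2) t /\ concat_idx C t = x ++ [:: true].
Proof.
move: {2}(size x) (leqnn (size x)) => n.
elim: n x => [|n IH] x.
  by case: x => // _ _; exists [:: 0].
case: x => [|a x] Hs Hh; first by exists [:: 0].
case: a Hs Hh => Hs Hh.
  rewrite hasff_true in Hh.
  have [t [Ht Hc]] := IH x Hs Hh.
  by exists (0 :: t); rewrite /= Ht concat_cons Hc.
case: x Hs Hh => [|b x] Hs Hh; first by exists [:: 1].
case: b Hh Hs => Hh Hs; last by [].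
rewrite hasff_ft in Hh.
have [t [Ht Hc]] := IH x (leq_trans (leqnSn _) Hs) Hh.
by exists (1 :: t); rewrite /= Ht concat_cons Hc.
Qed.

Lemma notcode : ~~ hasff w -> ~ is_code C.
Proof.
move=> /decomp [t [Ht Hc]] Hcode.
have Hne : t != [::] by case: t Ht Hc => // _; case: w.
have := Hcode [:: 2; 0] t erefl Hne erefl.
have -> : all (fun i => i < size C) t.
  by apply: sub_all Ht => i /= /ltn_trans; apply.
move=> /(_ erefl).
have -> : concat_idx C [:: 2; 0] = w ++ [:: true] by [].
move=> /(_ (esym Hc)) E.
by move: Ht; rewrite -E.
Qed.

Hypothesis Hw : hasff w.

Lemma exm : exists n, hasff (take n w).
Proof. by exists (size w); rewrite take_size. Qed.

Let m := ex_minn exm.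

Lemma m_spec : hasff (take m w) /\ forall n, hasff (take n w) -> m <= n.
Proof. rewrite /m; case: ex_minnP => k Hk Hmin; by split. Qed.

Lemma m_le : m <= size w.
Proof. by apply: (proj2 m_spec); rewrite take_size. Qed.

Lemma m_pos : 0 < m.
Proof. have := proj1 m_spec; case: (m) => //; by rewrite take0. Qed.

Lemma take_true n y : hasff (take n ([:: true] ++ y)) -> hasff (take (n - 1) y).
Proof. case: n => [|n] //=; rewrite subn1 /=; by case: (take n y). Qed.

Lemma take_ft n y : hasff (take n ([:: false; true] ++ y)) -> hasff (take (n - 2) y).
Proof. case: n => [|[|n]] //=; rewrite subn2 /=; by case: (take n y). Qed.

Lemma L t : all (fun i => i < 3) t -> forall n, hasff (take n (concat_idx C t)) -> m <= n.
Proof.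
elim: t => [|i t IH] /=; first by move=> _ []...
move=> /andP [Hi Ht] n; rewrite concat_cons.
case: i Hi => [|[|[|i]]] // _ /=.
- by move/take_true/(IH Ht) => H; lia.
- by move/take_ft/(IH Ht) => H; lia.
- rewrite take_cat; case: ltnP => Hn.
    by move/(proj2 m_spec).
  by move=> _; have := m_le; lia.
Qed.

Lemma key j s t : j < 2 -> all (fun i => i < 3) t ->
  w ++ concat_idx C s <> nth [::] C j ++ concat_idx C t.
Proof.
move=> Hj Ht E.
have H1 : hasff (take m (w ++ concat_idx C s)).
  rewrite takel_cat ?m_le //. exact: (proj1 m_spec).
rewrite E in H1; clear E.
have := m_pos.
case: j Hj H1 => [|[|j]] // _ /=.
- by move/take_true/(L Ht) => H; lia.
- by move/take_ft/(L Ht) => H; lia.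
Qed.

Lemma concat_nil t : all (fun i => i < 3) t -> concat_idx C t = [::] -> t = [::].
Proof.
case: t => [|i t] //= /andP [Hi _]; rewrite concat_cons.
case: i Hi => [|[|[|i]]] //= _; by case: w Hw.
Qed.

Lemma iscode : is_code C.
Proof.
move=> s t _ _ /= Hs Ht; elim: s t Hs Ht => [|i s IH] t Hs Ht.
  by move=> E; apply/esym/concat_nil.
case: t Ht => [|j t] Ht.
  by move=> E; have := concat_nil Hs E.
move: Hs Ht => /= /andP [Hi Hs] /andP [Hj Ht]; rewrite !concat_cons.
case: (eqVneq i j) => [<- | Hij] E.
  by rewrite (IH t Hs Ht (catsI' E)) .
exfalso.
case: i Hi Hij E => [|[|[|i]]] // _; case: j Hj => [|[|[|j]]] //= _ _.
- by move/esym/(key (s:=t) (j:=0) erefl Hs).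
- by move/esym/(key (s:=t) (j:=1) erefl Hs).
- by move/(key (j:=0) erefl Ht).
- by move/(key (j:=1) erefl Ht).
Qed.

End W.

Fixpoint goods (n : nat) : seq word :=
  match n with
  | 0 => [:: [::]]
  | 1 => [:: [:: true]; [:: false]]
  | (k.+1 as n1).+1 => [seq true :: x | x <- goods n1] ++ [seq false :: true :: x | x <- goods k]
  end.

Lemma goods_spec n : (forall x, (x \in goods n) = (size x == n) && ~~ hasff x)
  /\ uniq (goods n) /\ size (goods n) = fib n.+2.
Proof.
elim: n {-2}n (leqnn n) => [|N IH] n Hn.
  case: n Hn => // _; split => // x; rewrite inE; case: x => //.
case: n Hn => [|[|n]] Hn.
- by split => // x; rewrite inE; case: x.
- split => //= x; rewrite !inE; case: x => [|a [|b x]] //=; case: a => //.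
have [IA [UA SA]] := IH n.+1 Hn.
have [IB [UB SB]] := IH n (ltnW Hn).
split; [|split].
- move=> x; have -> : goods n.+2 = [seq true :: y | y <- goods n.+1] ++ [seq false :: true :: y | y <- goods n] by [].
  rewrite mem_cat; case: x => [|a x].
    rewrite /=; apply/negbTE; rewrite negb_or; apply/andP; split; apply/mapP; by case.
  case: a.
  + have -> : (true :: x \in [seq true :: y | y <- goods n.+1]) = (x \in goods n.+1).
      by apply: mem_map => ? ? [].
    have -> : (true :: x \in [seq false :: true :: y | y <- goods n]) = false.
      by apply/mapP => -[y _ []].
    by rewrite orbF IA hasff_true.
  + have -> : (false :: x \in [seq true :: y | y <- goods n.+1]) = false.
      by apply/mapP => -[y _ []].
    case: x => [|b x].
      by apply/negbTE/mapP => -[y _ []].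
    case: b.
      have -> : (false :: true :: x \in [seq false :: true :: y | y <- goods n]) = (x \in goods n).
        by apply: mem_map => ? ? [].
      by rewrite IB hasff_ft.
    by rewrite /= andbF; apply/negbTE/mapP => -[y _ []].
- rewrite -[goods n.+2]/([seq true :: y | y <- goods n.+1] ++ [seq false :: true :: y | y <- goods n]) cat_uniq !map_inj_uniq ?UA ?UB ?andbT //; try by move=> ? ? [].
  apply/hasPn => x /mapP [y _ ->]; apply/mapP; by case.
- by rewrite size_cat !size_map SA SB /= addnC.
Qed.

Theorem proposition4 (c : nat) (K : {set c.-tuple bool}) :
  1 <= c ->
  (forall w : c.-tuple bool,
      w \in K <-> ~ is_code [:: [:: true]; [:: false; true]; val w]) ->
  K = J101 c /\ #|K| = fib c.+2.
Proof.
move=> _ HK.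
have EK : K = J101 c.
  apply/setP => w; rewrite inE infix_hasff; apply/idP/idP.
    move/HK => H; apply/negP => Hh; exact: H (iscode Hh).
  by move=> Hh; apply/HK; apply: notcode.
split=> //; rewrite EK.
have [IG [UG SG]] := goods_spec c.
rewrite -SG cardE -(size_map val); apply: perm_size.
apply: uniq_perm; first by rewrite map_inj_uniq ?enum_uniq //; exact: val_inj.
  exact: UG.
move=> x; rewrite IG; apply/idP/idP.
  move=> /mapP [y]; rewrite mem_enum inE infix_hasff => Hy ->; by rewrite size_tuple eqxx.
case/andP => /eqP Hs Hh.
have -> : x = val (Tuple (introT eqP Hs)) by [].
by apply: map_f; rewrite mem_enum inE infix_hasff.
Qed.
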